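(* Let $A$ be a primitive axial algebra of Jordan type $\eta$ and let $a,b$ be distinct $\eta$-axes with $N=N_{a,b}$ $3$-dimensional. Let $V=N_{b,\,b^{\tau(a)}}$. Then either $V=N$, or $\eta=\tfrac12$, $N$ has an identity element $\mathbf 1$, and exactly one of the following holds: (i) $ab=-\tfrac12\mathbf 1+\tfrac12a+\tfrac12b$, $b\,b^{\tau(a)}=\tfrac12b+\tfrac12b^{\tau(a)}$, $\dim V=2$, and $\mathrm{Span}\{b,b^{\tau(a)}\}\cap\mathrm{Span}\{\mathbf 1,a\}=\mathbb F(\mathbf 1-a)$; (ii) $ab=-\tfrac14\mathbf 1+\tfrac12a+\tfrac12b$, $b\,b^{\tau(a)}=0$, $\dim V=2$, and $\mathrm{Span}\{b,b^{\tau(a)}\}\cap\mathrm{Span}\{\mathbf 1,a\}=\mathbb F\mathbf 1$.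
   Context: Throughout, $\mathbb F$ is a field of characteristic $\neq 2$ and $\eta\in\mathbb F\setminus\{0,1\}$. Let $A$ be a commutative, not necessarily associative $\mathbb F$-algebra. For $a\in A$ and $\lambda\in\mathbb F$ put $A_\lambda(a)=\{x\in A: xa=\lambda x\}$. An $\eta$-axis of $A$ is an element $a$ with $a^2=a$ such that $A=A_1(a)\oplus A_0(a)\oplus A_\eta(a)$, $A_1(a)=\mathbb F a$, and, writing $A_+(a)=A_1(a)\oplus A_0(a)$ and $A_-(a)=A_\eta(a)$, one has $A_+(a)A_+(a)\subseteq A_+(a)$, $A_+(a)A_-(a)\subseteq A_-(a)$, $A_-(a)A_-(a)\subseteq A_+(a)$ and $A_0(a)A_0(a)\subseteq A_0(a)$. $A$ is a primitive axial algebra of Jordan type $\eta$ if it is generated by $\eta$-axes. The Miyamoto involution $\tau(a)$ acts as $1$ on $A_+(a)$ and $-1$ on $A_-(a)$. $N_{x,y}$ is the subalgebra generated by $x,y$; an identity element of a subalgebra $N$ is $\mathbf 1\in N$ with $\mathbf 1n=n$ for all $n\in N$. *)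

(* Defs.v *)
(* A commutative non-associative F-algebra is modelled as an
   F-vector space V : lmodType F together with a commutative bilinear product. *)
From HB Require Import structures.
From mathcomp Require Import all_boot all_order all_algebra.
Set Implicit Arguments. Unset Strict Implicit. Unset Printing Implicit Defensive.
Import Order.TTheory GRing.Theory.
Local Open Scope ring_scope.

Section AxialDefs.
Variables (F : fieldType) (V : lmodType F) (mul : V -> V -> V).

(* commutative, bilinear product (linearity in the first argument follows) *)
Definition comm_bilinear : Prop :=
  (forall x y, mul x y = mul y x) /\
  (forall (k : F) x y z, mul x (k *: y + z) = k *: mul x y + mul x z).

Definition eigen (a : V) (l : F) (x : V) : Prop := mul x a = l *: x.

Definition Aplus (a : V) (x : V) : Prop :=
  exists x1 x0, eigen a 1 x1 /\ eigen a 0 x0 /\ x = x1 + x0.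

Definition is_axis (eta : F) (a : V) : Prop :=
  [/\ mul a a = a,
      (forall x, exists x1 x0 xe,
          [/\ eigen a 1 x1, eigen a 0 x0, eigen a eta xe & x = x1 + x0 + xe]),
      (forall x1 x0 xe, eigen a 1 x1 -> eigen a 0 x0 -> eigen a eta xe ->
          x1 + x0 + xe = 0 -> [/\ x1 = 0, x0 = 0 & xe = 0]),
      (forall x, eigen a 1 x <-> exists k : F, x = k *: a) &
      [/\ (forall x y, Aplus a x -> Aplus a y -> Aplus a (mul x y)),
          (forall x y, Aplus a x -> eigen a eta y -> eigen a eta (mul x y)),
          (forall x y, eigen a eta x -> eigen a eta y -> Aplus a (mul x y)) &
          (forall x y, eigen a 0 x -> eigen a 0 y -> eigen a 0 (mul x y))]].

Definition subalg_closed (S : V -> Prop) : Prop :=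
  [/\ S 0, (forall x y, S x -> S y -> S (x + y)),
      (forall (k : F) x, S x -> S (k *: x)) &
      (forall x y, S x -> S y -> S (mul x y))].

Definition gen (X : V -> Prop) (z : V) : Prop :=
  forall S : V -> Prop, subalg_closed S -> (forall x, X x -> S x) -> S z.

Definition N2 (x y : V) : V -> Prop := gen (fun z => z = x \/ z = y).

Definition primitive_axial_Jordan (eta : F) : Prop :=
  comm_bilinear /\ forall z, gen (is_axis eta) z.

(* c = b^{tau(a)}: tau(a) is 1 on A_+(a) and -1 on A_-(a) = A_eta(a) *)
Definition tau_image (eta : F) (a b c : V) : Prop :=
  exists bp bm, [/\ Aplus a bp, eigen a eta bm, b = bp + bm & c = bp - bm].

Definition is_identity (N : V -> Prop) (one : V) : Prop :=
  N one /\ forall n, N n -> mul one n = n.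

End AxialDefs.

Section LinDefs.
Variables (F : fieldType) (V : lmodType F).

Definition span_of (s : seq V) (z : V) : Prop :=
  exists c : 'I_(size s) -> F, z = \sum_(i < size s) c i *: s`_i.

Definition lin_free (s : seq V) : Prop :=
  forall c : 'I_(size s) -> F,
    \sum_(i < size s) c i *: s`_i = 0 -> forall i, c i = 0.

Definition has_dim (P : V -> Prop) (n : nat) : Prop :=
  exists s : seq V, [/\ size s = n, lin_free s & forall z, P z <-> span_of s z].

End LinDefs.

(* Main.v *)
Require Import Defs.
From HB Require Import structures.
From mathcomp Require Import all_boot all_order all_algebra ring.
Import Order.TTheory GRing.Theory.
Local Open Scope ring_scope.
Set Implicit Arguments. Unset Strict Implicit. Unset Printing Implicit Defensive.

Section LinAlg.
Variables (F : fieldType) (V : lmodType F).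

Lemma dep_lemma (s t : seq V) :
  (size s < size t)%N ->
  (forall i : 'I_(size t), span_of s t`_i) ->
  exists c : 'I_(size t) -> F, (exists i, c i != 0) /\
     \sum_(i < size t) c i *: t`_i = 0.
Proof.
move=> hlt hsp.
have [M hM] : exists M : 'M[F]_(size t, size s),
    forall i : 'I_(size t), t`_i = \sum_(j < size s) M i j *: s`_j.
  have hc : forall i : 'I_(size t), exists c : 'I_(size s) -> F,
      t`_i = \sum_(j < size s) c j *: s`_j by move=> i; exact: hsp.
  have [f hf] := fin_all_exists hc.
  by exists (\matrix_(i, j) f i j) => i; rewrite (hf i); apply: eq_bigr => j _; rewrite mxE.
set K := kermx M.
have hK : K != 0.
  rewrite kermx_eq0 /row_free; apply/negP => /eqP h.
  have := rank_leq_col M; rewrite h => h2.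
  by move: hlt; rewrite ltnNge h2.
have : ~~ [forall i, forall j, K i j == 0].
  apply/negP => /forallP h; move: hK; rewrite (_ : K = 0) ?eqxx //.
  apply/matrixP => i j; have := h i => /forallP/(_ j)/eqP ->; by rewrite mxE.
move=> /forallPn [i] /forallPn [j hij].
exists (fun k => K i k); split; first by exists j.
have hz : row i K *m M = 0 by rewrite -row_mul mulmx_ker row0.
under eq_bigr => k _ do rewrite hM scaler_sumr.
rewrite exchange_big /=.
rewrite (eq_bigr (fun _ => 0)) ?big1 // => l _.
under eq_bigr => k _ do rewrite scalerA.
rewrite -scaler_suml.
have : (row i K *m M) 0 l = 0 by rewrite hz mxE.
rewrite mxE; under eq_bigr => ? _ do rewrite mxE.
by move=> ->; rewrite scale0r.
Qed.

End LinAlg.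
Section Comb.
Variables (F : fieldType) (A : lmodType F) (u v w : A).
Fact E_key : unit. Proof. exact: tt. Qed.
Definition E (p q r : F) : A := locked_with E_key (p *: u + q *: v + r *: w).
Lemma E_def p q r : E p q r = p *: u + q *: v + r *: w.
Proof. by rewrite /E unlock. Qed.
Lemma E_add p q r p' q' r' : E p q r + E p' q' r' = E (p + p') (q + q') (r + r').
Proof. by rewrite !E_def !scalerDl addrACA [X in X + _]addrACA. Qed.
Lemma E_scale k p q r : k *: E p q r = E (k * p) (k * q) (k * r).
Proof. by rewrite !E_def !scalerDr !scalerA. Qed.
Lemma E_opp p q r : - E p q r = E (- p) (- q) (- r).
Proof. by rewrite -scaleN1r E_scale !mulN1r. Qed.
Lemma E_sub p q r p' q' r' : E p q r - E p' q' r' = E (p - p') (q - q') (r - r').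
Proof. by rewrite E_opp E_add. Qed.
Lemma E0 : E 0 0 0 = 0.
Proof. by rewrite !E_def !scale0r !addr0. Qed.
Lemma E_eq p q r p' q' r' : p = p' -> q = q' -> r = r' -> E p q r = E p' q' r'.
Proof. by move=> -> -> ->. Qed.
Lemma Eu : u = E 1 0 0. Proof. by rewrite !E_def scale1r !scale0r !addr0. Qed.
Lemma Ev : v = E 0 1 0. Proof. by rewrite !E_def scale1r !scale0r add0r addr0. Qed.
Lemma Ew : w = E 0 0 1. Proof. by rewrite !E_def scale1r !scale0r !add0r. Qed.
Lemma E_inj_gen : (forall p q r, E p q r = 0 -> [/\ p = 0, q = 0 & r = 0]) ->
  forall p q r p' q' r', E p q r = E p' q' r' -> [/\ p = p', q = q' & r = r'].
Proof.
move=> h p q r p' q' r' /eqP; rewrite -subr_eq0 E_sub => /eqP /h [].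
by move/eqP; rewrite subr_eq0 => /eqP -> /eqP; rewrite subr_eq0 => /eqP -> /eqP; rewrite subr_eq0 => /eqP ->.
Qed.
Definition span3 z := exists p q r, z = E p q r.
Lemma span3_add x y : span3 x -> span3 y -> span3 (x + y).
Proof. by move=> [p [q [r ->]]] [p' [q' [r' ->]]]; rewrite E_add; do 3!eexists. Qed.
Lemma span3_scale k x : span3 x -> span3 (k *: x).
Proof. by move=> [p [q [r ->]]]; rewrite E_scale; do 3!eexists. Qed.
Lemma span3_E p q r : span3 (E p q r). Proof. by do 3!eexists. Qed.
End Comb.

Section Alg.
Variables (F : fieldType) (A : lmodType F) (mul : A -> A -> A).
Hypothesis mulC : forall x y, mul x y = mul y x.
Hypothesis mulL : forall (k : F) x y z, mul x (k *: y + z) = k *: mul x y + mul x z.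

Lemma mulr0m x : mul x 0 = 0.
Proof. have := mulL 1 x 0 0; rewrite scaler0 add0r scale1r => h. by apply: (addrI (mul x 0)); rewrite addr0 -h. Qed.
Lemma mul0m x : mul 0 x = 0.
Proof. by rewrite mulC mulr0m. Qed.
Lemma mulDm x y z : mul x (y + z) = mul x y + mul x z.
Proof. by have := mulL 1 x y z; rewrite !scale1r. Qed.
Lemma mulZm k x y : mul x (k *: y) = k *: mul x y.
Proof. by have := mulL k x y 0; rewrite !addr0 mulr0m addr0. Qed.
Lemma mulmD x y z : mul (y + z) x = mul y x + mul z x.
Proof. by rewrite mulC mulDm !(mulC x). Qed.
Lemma mulmZ k x y : mul (k *: y) x = k *: mul y x.
Proof. by rewrite mulC mulZm mulC. Qed.
Lemma mulNm x y : mul x (- y) = - mul x y.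
Proof. by rewrite -scaleN1r mulZm scaleN1r. Qed.
Lemma mulmN x y : mul (- y) x = - mul y x.
Proof. by rewrite -scaleN1r mulmZ scaleN1r. Qed.
Lemma mulBm x y z : mul x (y - z) = mul x y - mul x z.
Proof. by rewrite mulDm mulNm. Qed.
Lemma mulmB x y z : mul (y - z) x = mul y x - mul z x.
Proof. by rewrite mulmD mulmN. Qed.

Lemma gen_closed (X : A -> Prop) : Defs.subalg_closed mul (Defs.gen mul X).
Proof.
split.
- by move=> S [] ? _ _ _ _.
- by move=> x y hx hy S hS hX; case: (hS) => _ hD _ _; apply: hD; [apply: hx|apply: hy].
- by move=> k x hx S hS hX; case: (hS) => _ _ hZ _; apply: hZ; apply: hx.
- by move=> x y hx hy S hS hX; case: (hS) => _ _ _ hM; apply: hM; [apply: hx|apply: hy].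
Qed.

Lemma gen_in (X : A -> Prop) x : X x -> Defs.gen mul X x.
Proof. by move=> hx S _ hX; apply: hX. Qed.

Lemma sc_lin S k l x y : Defs.subalg_closed mul S -> S x -> S y -> S (k *: x + l *: y).
Proof. by case=> _ hD hZ _ hx hy; apply: hD; apply: hZ. Qed.

Lemma sc_sub S x y : Defs.subalg_closed mul S -> S x -> S y -> S (x - y).
Proof. by move=> hS hx hy; rewrite -[x]scale1r -scaleN1r; apply: sc_lin. Qed.

Lemma sq_split x y : mul (x + y) (x + y) = (mul x x + mul y y) + (mul x y + mul x y).
Proof. by rewrite mulDm !mulmD (mulC y x) [mul x y + mul y y]addrC addrACA. Qed.

Lemma mulE_l (u v w : A) p q r y :
  mul (E u v w p q r) y = p *: mul u y + q *: mul v y + r *: mul w y.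
Proof. by rewrite !E_def !mulmD !mulmZ. Qed.
Lemma mulE_r (u v w : A) p q r y :
  mul y (E u v w p q r) = p *: mul y u + q *: mul y v + r *: mul y w.
Proof. by rewrite !E_def !mulDm !mulZm. Qed.

Lemma span3_closed (u v w : A) :
  span3 u v w (mul u u) -> span3 u v w (mul u v) -> span3 u v w (mul u w) ->
  span3 u v w (mul v v) -> span3 u v w (mul v w) -> span3 u v w (mul w w) ->
  Defs.subalg_closed mul (span3 u v w).
Proof.
move=> huu huv huw hvv hvw hww.
have hs3 : forall (a b c : A) p q r, span3 u v w a -> span3 u v w b -> span3 u v w c ->
    span3 u v w (p *: a + q *: b + r *: c).
  move=> a b c p q r ha hb hc; apply: span3_add; first apply: span3_add.
    exact: (span3_scale p ha).
    exact: (span3_scale q hb).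
  exact: (span3_scale r hc).
split.
- by exists 0, 0, 0; rewrite E0.
- exact: span3_add.
- exact: span3_scale.
move=> x y [p [q [r ->]]] [p' [q' [r' ->]]].
rewrite mulE_l !mulE_r; apply: (hs3); apply: (hs3) => //; rewrite mulC //.
Qed.

Lemma span_of2 (u v z : A) : span_of [:: u; v] z <-> exists k l, z = k *: u + l *: v.
Proof.
split.
  move=> [c ->]; rewrite big_ord_recr big_ord_recr big_ord0 /= add0r.
  by do 2!eexists.
move=> [k [l ->]]; exists (fun i => nth 0 [:: k; l] i).
by rewrite big_ord_recr big_ord_recr big_ord0 /= add0r.
Qed.

Lemma lin_free2 (u v : A) :
  (forall k l, k *: u + l *: v = 0 -> k = 0 /\ l = 0) -> lin_free [:: u; v].
Proof.
move=> h c; rewrite big_ord_recr big_ord_recr big_ord0 /= add0r => /h [h0 h1].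
case=> [[|[|i]] hi] //.
- by rewrite -h0; congr c; apply: val_inj.
- by rewrite -h1; congr c; apply: val_inj.
Qed.

Lemma span_of3 (x y z w : A) : span_of [:: x; y; z] w <-> span3 x y z w.
Proof.
split.
  move=> [c ->]; rewrite big_ord_recr big_ord_recr big_ord_recr big_ord0 /= add0r.
  by do 3!eexists; rewrite E_def; reflexivity.
move=> [p [q [r ->]]]; exists (fun i => nth 0 [:: p; q; r] i).
by rewrite E_def big_ord_recr big_ord_recr big_ord_recr big_ord0 /= add0r.
Qed.

Lemma span3_0 (u v z : A) : span3 u v 0 z -> span_of [:: u; v] z.
Proof. by move=> [p [q [r ->]]]; apply/span_of2; exists p, q; rewrite !E_def scaler0 addr0. Qed.

Lemma dim3_cases (P : A -> Prop) : has_dim P 3 ->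
  exists t0 t1 t2, [/\ lin_free [:: t0; t1; t2], forall z, P z <-> span3 t0 t1 t2 z,
     P t0, P t1 & P t2].
Proof.
move=> [t [ht hfree hP]].
case: t ht hfree hP => [|t0 [|t1 [|t2 [|? ?]]]] //= _ hfree hP.
have hP' : forall z, P z <-> span3 t0 t1 t2 z.
  by move=> z; split => [/hP/span_of3|/span_of3/hP].
exists t0, t1, t2; split => //; apply/hP'.
- by exists 1, 0, 0; rewrite -Eu.
- by exists 0, 1, 0; rewrite -Ev.
- by exists 0, 0, 1; rewrite -Ew.
Qed.

Lemma no_span2 (P : A -> Prop) (u v : A) :
  has_dim P 3 -> (forall z, P z -> span3 u v 0 z) -> False.
Proof.
move=> /dim3_cases [t0 [t1 [t2 [hfree hP h0 h1 h2]]]] hsub.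
have [] := @dep_lemma F A [:: u; v] [:: t0; t1; t2] erefl.
  by case=> [[|[|[|i]]] hi] //=; apply: span3_0; apply: hsub.
move=> c [[i hi] hsum].
by move/eqP: hi; apply; apply: hfree.
Qed.

Lemma dep4 (P : A -> Prop) (x0 x1 x2 x3 : A) :
  has_dim P 3 -> P x0 -> P x1 -> P x2 -> P x3 ->
  exists c0 c1 c2 c3 : F, (~ [/\ c0 = 0, c1 = 0, c2 = 0 & c3 = 0]) /\ (c0 *: x0 + c1 *: x1 + c2 *: x2 + c3 *: x3 = 0).
Proof.
move=> /dim3_cases [t0 [t1 [t2 [hfree hP _ _ _]]]] h0 h1 h2 h3.
have [] := @dep_lemma F A [:: t0; t1; t2] [:: x0; x1; x2; x3] erefl.
  by case=> [[|[|[|[|i]]]] hi] //=; apply/span_of3/hP.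
move=> c [[i hi] hsum].
move: hsum; rewrite !big_ord_recr big_ord0 /= add0r => hsum.
do 4!eexists; split; last exact: hsum.
case=> e0 e1 e2 e3; move/eqP: hi; apply.
case: i => [[|[|[|[|i]]]] hi] //.
- by rewrite -e0; congr c; apply: val_inj.
- by rewrite -e1; congr c; apply: val_inj.
- by rewrite -e2; congr c; apply: val_inj.
- by rewrite -e3; congr c; apply: val_inj.
Qed.

Section Axis.
Variables (eta : F) (a : A).
Hypothesis ha : is_axis mul eta a.

Lemma eig_add l x y : eigen mul a l x -> eigen mul a l y -> eigen mul a l (x + y).
Proof. by rewrite /eigen mulmD => -> ->; rewrite scalerDr. Qed.
Lemma eig_scale l k x : eigen mul a l x -> eigen mul a l (k *: x).
Proof. by rewrite /eigen mulmZ => ->; rewrite !scalerA mulrC. Qed.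
Lemma eig0 l : eigen mul a l 0.
Proof. by rewrite /eigen mul0m scaler0. Qed.
Lemma eig_sub l x y : eigen mul a l x -> eigen mul a l y -> eigen mul a l (x - y).
Proof. by move=> hx hy; rewrite -scaleN1r; apply: eig_add => //; apply: eig_scale. Qed.

Lemma Ap_add x y : Aplus mul a x -> Aplus mul a y -> Aplus mul a (x + y).
Proof.
move=> [x1 [x0 [h1 [h0 ->]]]] [y1 [y0 [h1' [h0' ->]]]].
exists (x1 + y1), (x0 + y0); split; first exact: eig_add.
by split; [exact: eig_add | rewrite addrACA].
Qed.
Lemma Ap_scale k x : Aplus mul a x -> Aplus mul a (k *: x).
Proof.
move=> [x1 [x0 [h1 [h0 ->]]]]; exists (k *: x1), (k *: x0); split; first exact: eig_scale.
by split; [exact: eig_scale | rewrite scalerDr].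
Qed.
Lemma Ap_sub x y : Aplus mul a x -> Aplus mul a y -> Aplus mul a (x - y).
Proof. by move=> hx hy; rewrite -scaleN1r; apply: Ap_add => //; apply: Ap_scale. Qed.
Lemma Ap_1 x : eigen mul a 1 x -> Aplus mul a x.
Proof. by move=> h; exists x, 0; split => //; split; [exact: eig0 | rewrite addr0]. Qed.
Lemma Ap_0 x : eigen mul a 0 x -> Aplus mul a x.
Proof. by move=> h; exists 0, x; split; [exact: eig0 | split => //; rewrite add0r]. Qed.

Lemma dir_pe p e : Aplus mul a p -> eigen mul a eta e -> p + e = 0 -> p = 0 /\ e = 0.
Proof.
case: ha => _ _ hdir _ _ [p1 [p0 [h1 [h0 ->]]]] he hs.
by have [-> -> ->] := hdir _ _ _ h1 h0 he hs; rewrite addr0.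
Qed.

Lemma uniq_pe p e p' e' : Aplus mul a p -> eigen mul a eta e ->
  Aplus mul a p' -> eigen mul a eta e' -> p + e = p' + e' -> p = p' /\ e = e'.
Proof.
move=> hp he hp' he' h.
have [] := @dir_pe (p - p') (e - e').
- exact: Ap_sub.
- exact: eig_sub.
- by rewrite addrACA h addrACA !subrr addr0.
by move/eqP; rewrite subr_eq0 => /eqP -> /eqP; rewrite subr_eq0 => /eqP ->.
Qed.

End Axis.

Record Tbl (eta phi nu : F) (a b b0 be : A) : Prop := MkTbl {
 tb_b : b = E a b0 be phi 1 1;
 tb_aa : mul a a = a;
 tb_ab0 : mul a b0 = 0;
 tb_abe : mul a be = eta *: be;
 tb_b0b0 : mul b0 b0 = nu *: b0;
 tb_b0be : mul b0 be = (2^-1 - phi * eta) *: be;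
 tb_bebe : mul be be = (phi - phi^+2) *: a + (1 - nu) *: b0;
 tb_ind : forall p q r, E a b0 be p q r = 0 -> [/\ p = 0, q = 0 & r = 0];
 tb_N : forall z, N2 mul a b z <-> span3 a b0 be z;
 tb_Ap : Aplus mul a (phi *: a + b0);
 tb_e : eigen mul a eta be }.

Lemma scale_cancel (k : F) (x : A) : k != 0 -> k *: x = 0 -> x = 0.
Proof. by move=> hk /eqP; rewrite scaler_eq0 (negbTE hk) => /eqP. Qed.

Section Key.
Variable eta : F.
Hypotheses (eta0 : eta != 0) (eta1 : eta != 1) (two0 : 2 != 0 :> F).

Lemma key a b : is_axis mul eta a -> mul b b = b -> has_dim (N2 mul a b) 3 ->
  exists phi nu b0 be, Tbl eta phi nu a b b0 be.
Proof.
move=> ha hbb hdim.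
case: (ha) => haa hdec _ h1 [fpp fpe fee f00].
have [b1 [b0 [be [e1 e0 ee hb]]]] := hdec b.
have [phi hb1] := (h1 b1).1 e1.
have ma0 : mul a b0 = 0 by rewrite mulC e0 scale0r.
have mae : mul a be = eta *: be by rewrite mulC ee.
have hx : mul a b = phi *: a + eta *: be.
  by rewrite hb hb1 !mulDm mulZm haa ma0 mae addr0.
set N := N2 mul a b.
have hNc : Defs.subalg_closed mul N := gen_closed _.
have [hN0 hND hNZ hNM] := hNc.
have Na : N a by apply: gen_in; left.
have Nb : N b by apply: gen_in; right.
have Nx : N (mul a b) by apply: (hNM).
have hbe : be = eta^-1 *: (mul a b - phi *: a).
  by rewrite hx addrAC subrr add0r scalerA mulVf // scale1r.
have Nbe : N be by rewrite hbe; apply: (hNZ); apply: (sc_sub hNc) => //; apply: (hNZ).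
have hb0 : b0 = b - phi *: a - be.
  by rewrite hb hb1 addrAC addrK addrAC subrr add0r.
have Nb0 : N b0 by rewrite hb0; apply: (sc_sub hNc) => //; apply: (sc_sub hNc) => //; apply: (hNZ).
have Eab : forall y, y = a \/ y = b -> span3 a b 0 y.
  by move=> y [->|->]; [exists 1, 0, 0; exact: Eu | exists 0, 1, 0; exact: Ev].
have be_nz : be != 0.
  apply/negP => /eqP be0; apply: (@no_span2 N a b hdim) => z hz.
  apply: (hz (span3 a b 0)) => //; apply: span3_closed.
  - by rewrite haa; exists 1, 0, 0; exact: Eu.
  - by rewrite hx be0 scaler0 addr0; exists phi, 0, 0; rewrite !E_def !scale0r !addr0.
  - by rewrite mulr0m; exists 0, 0, 0; rewrite E0.
  - by rewrite hbb; exists 0, 1, 0; exact: Ev.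
  - by rewrite mulr0m; exists 0, 0, 0; rewrite E0.
  - by rewrite mulr0m; exists 0, 0, 0; rewrite E0.
have a_nz : a != 0.
  apply/negP => /eqP a0; have /eqP := mae.
  by rewrite a0 mul0m eq_sym scaler_eq0 (negbTE eta0) /=; apply/negP.
have Apa : Aplus mul a (phi *: a + b0).
  exists (phi *: a), b0; split; first by rewrite /eigen mulmZ haa scale1r.
  by split.
set p := phi *: a + b0.
have hbp : b = p + be by rewrite hb hb1.
have mpbe : mul p be = (phi * eta) *: be + mul b0 be by rewrite /p mulmD mulmZ (mulC a be) ee scalerA.
have mpp : mul p p = phi^+2 *: a + mul b0 b0.
  rewrite /p !mulDm !mulmD !mulmZ !mulZm haa ma0 (mulC b0 a) ma0 !scaler0 !addr0 add0r.
  by rewrite scalerA expr2.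
have hsq : mul b b = (mul p p + mul be be) + (mul p be + mul p be).
  by rewrite hbp sq_split.
have [hplus heta] : mul p p + mul be be = p /\ mul p be + mul p be = be.
  apply: (@uniq_pe eta a ha) => //.
  - by apply: Ap_add; [apply: fpp | apply: fee].
  - by apply: eig_add; apply: fpe.
  - by rewrite -hsq hbb.
have hb0be : mul b0 be = (2^-1 - phi * eta) *: be.
  have hX : (phi * eta) *: be + mul b0 be = 2^-1 *: be.
    by rewrite -[in RHS]heta mpbe -mulr2n -scaler_nat scalerA mulVf // scale1r.
  by rewrite scalerBl -hX [_ + mul b0 be]addrC addrK.
have hbebe : mul be be = p - mul p p.
  by apply/eqP; rewrite eq_sym subr_eq addrC hplus.
have b0_nz : b0 != 0.
  apply/negP => /eqP b00.
  have hbb' : mul be be = (phi - phi^+2) *: a.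
    by rewrite hbebe mpp /p b00 mulr0m !addr0 scalerBl.
  apply: (@no_span2 N a be hdim) => z hz.
  apply: (hz (span3 a be 0)).
    apply: span3_closed.
    - by rewrite haa; exists 1, 0, 0; exact: Eu.
    - by rewrite mae; exists 0, eta, 0; rewrite !E_def !scale0r addr0 add0r.
    - by rewrite mulr0m; exists 0, 0, 0; rewrite E0.
    - by rewrite hbb'; exists (phi - phi^+2), 0, 0; rewrite !E_def !scale0r !addr0.
    - by rewrite mulr0m; exists 0, 0, 0; rewrite E0.
    - by rewrite mulr0m; exists 0, 0, 0; rewrite E0.
  move=> y [->|->]; first by exists 1, 0, 0; exact: Eu.
  by exists phi, 1, 0; rewrite hb hb1 b00 !E_def scale1r scale0r !addr0.
have ew : eigen mul a 0 (mul b0 b0) by apply: f00.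
have Nw : N (mul b0 b0) by apply: (hNM).
have [c0 [c1 [c2 [c3 [hnz hsum]]]]] := dep4 hdim Na Nb0 Nbe Nw.
have hsum' : c0 *: a + (c1 *: b0 + c3 *: mul b0 b0) + c2 *: be = 0.
  by rewrite -hsum addrA -[LHS]addrA [c3 *: _ + _]addrC addrA.
have e1a : eigen mul a 1 a by rewrite /eigen haa scale1r.
case: (ha) => _ _ hdir _ _.
have [hc0 hc13 hc2] := hdir _ _ _ (eig_scale c0 e1a)
   (eig_add (eig_scale c1 e0) (eig_scale c3 ew)) (eig_scale c2 ee) hsum'.
have c00 : c0 = 0 by move/eqP: hc0; rewrite scaler_eq0 (negbTE a_nz) orbF => /eqP.
have c20 : c2 = 0 by move/eqP: hc2; rewrite scaler_eq0 (negbTE be_nz) orbF => /eqP.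
have c3nz : c3 != 0.
  apply/negP => /eqP c30; apply: hnz; split => //.
  by move: hc13; rewrite c30 scale0r addr0 => /eqP; rewrite scaler_eq0 (negbTE b0_nz) orbF => /eqP.
set nu := - c1 / c3.
have hw : mul b0 b0 = nu *: b0.
  have h3 : c3 *: mul b0 b0 = - (c1 *: b0).
  by apply/eqP; rewrite -subr_eq0 opprK addrC hc13 eqxx.
  have := congr1 (fun t => c3^-1 *: t) h3; rewrite /= scalerA mulVf // scale1r => ->.
  by rewrite scalerN scalerA -scaleNr /nu; congr (_ *: _); rewrite mulNr mulrC.
exists phi, nu, b0, be; constructor => //.
- by rewrite hb hb1 !E_def !scale1r.
- by rewrite hbebe mpp hw /p !scalerBl scale1r opprD addrACA.
- move=> q1 q2 q3; rewrite E_def => /(hdir _ _ _ (eig_scale q1 e1a) (eig_scale q2 e0) (eig_scale q3 ee)) [h1' h2' h3'].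
  split.
  + by move/eqP: h1'; rewrite scaler_eq0 (negbTE a_nz) orbF => /eqP.
  + by move/eqP: h2'; rewrite scaler_eq0 (negbTE b0_nz) orbF => /eqP.
  + by move/eqP: h3'; rewrite scaler_eq0 (negbTE be_nz) orbF => /eqP.
- move=> z; split.
    move=> hz; apply: (hz (span3 a b0 be)).
      apply: span3_closed.
      + by rewrite haa; exists 1, 0, 0; exact: Eu.
      + by rewrite ma0; exists 0, 0, 0; rewrite E0.
      + by rewrite mae; exists 0, 0, eta; rewrite !E_def !scale0r !add0r.
      + by rewrite hw; exists 0, nu, 0; rewrite !E_def !scale0r addr0 add0r.
      + by rewrite hb0be; exists 0, 0, (2^-1 - phi * eta); rewrite !E_def !scale0r !add0r.
      + by rewrite hbebe mpp hw /p; exists (phi - phi^+2), (1 - nu), 0; rewrite !E_def scale0r addr0 !scalerBl scale1r opprD addrACA.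
    move=> y [->|->]; first by exists 1, 0, 0; exact: Eu.
    by exists phi, 1, 1; rewrite hb hb1 !E_def !scale1r.
  move=> [q1 [q2 [q3 ->]]]; rewrite !E_def.
  by apply: (hND); [apply: (hND)|]; apply: (hNZ).
Qed.


End Key.

Section Tab.
Variables (eta phi nu : F) (a b b0 be : A).
Hypothesis T : Tbl eta phi nu a b b0 be.

Local Notation EE := (E a b0 be).

Lemma Emul p q r p' q' r' :
  mul (EE p q r) (EE p' q' r') =
  EE (p * p' + (phi - phi^+2) * (r * r')) (nu * (q * q') + (1 - nu) * (r * r'))
     (eta * (p * r' + r * p') + (2^-1 - phi * eta) * (q * r' + r * q')).
Proof.
case: T => _ haa hab0 habe hb0b0 hb0be hbebe _ _ _ _.
rewrite mulE_l !mulE_r (mulC b0 a) (mulC be a) (mulC be b0).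
have m1 : mul a a = EE 1 0 0 by rewrite haa; exact: Eu.
have m2 : mul a b0 = EE 0 0 0 by rewrite hab0 E0.
have m3 : mul a be = EE 0 0 eta by rewrite habe !E_def !scale0r !add0r.
have m4 : mul b0 b0 = EE 0 nu 0 by rewrite hb0b0 !E_def !scale0r addr0 add0r.
have m5 : mul b0 be = EE 0 0 (2^-1 - phi * eta) by rewrite hb0be !E_def !scale0r !add0r.
have m6 : mul be be = EE (phi - phi^+2) (1 - nu) 0 by rewrite hbebe !E_def scale0r addr0.
rewrite m1 m2 m3 m4 m5 m6 ?E_scale ?E_add ?E_scale ?E_add ?E_scale ?E_add.
by apply: E_eq; ring.
Qed.

Lemma Einj p q r p' q' r' : EE p q r = EE p' q' r' -> [/\ p = p', q = q' & r = r'].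
Proof. exact: (E_inj_gen (tb_ind T)). Qed.

Lemma Ea : a = EE 1 0 0. Proof. exact: Eu. Qed.
Lemma Eb : b = EE phi 1 1. Proof. exact: (tb_b T). Qed.
Lemma Ea_scale k : k *: a = EE k 0 0.
Proof. by rewrite {1}Ea E_scale !mulr0 mulr1. Qed.
Lemma mul_a x : mul a x = mul (EE 1 0 0) x.
Proof. by rewrite -Ea. Qed.
Lemma Eab : mul a b = EE phi 0 eta.
Proof. by rewrite Eb mul_a Emul; apply: E_eq; ring. Qed.

Lemma a_ab : mul a (mul a b) = eta *: mul a b + (phi * (1 - eta)) *: a.
Proof.
rewrite Ea_scale mul_a Eab Emul !E_scale E_add; apply: E_eq; ring.
Qed.

Lemma psi_rel psi : mul b (mul a b) = eta *: mul a b + (psi * (1 - eta)) *: b ->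
  [/\ phi * (phi - psi) * (1 - eta) = 0, eta * (1 - nu) = psi * (1 - eta) &
      phi * eta + eta / 2 = eta^+2 + psi * (1 - eta)].
Proof.
rewrite Eab Eb Emul !E_scale E_add => /Einj [h1 h2 h3]; split.
- by move/eqP: h1; rewrite -subr_eq0 => /eqP h1; rewrite -h1; ring.
- by move/eqP: h2; rewrite -subr_eq0 => /eqP h2; apply/eqP; rewrite -subr_eq0; apply/eqP; rewrite -h2; ring.
- by move/eqP: h3; rewrite -subr_eq0 => /eqP h3; apply/eqP; rewrite -subr_eq0; apply/eqP; rewrite -h3; ring.
Qed.
End Tab.

Section Tab2.
Variables (eta phi nu : F) (a b b0 be bt : A).
Hypothesis T : Tbl eta phi nu a b b0 be.
Hypothesis hbt : bt = E a b0 be phi 1 (-1).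
Hypothesis two0 : 2 != 0 :> F.

Local Notation EE := (E a b0 be).

Lemma mul_bbt : mul b bt = EE (2 * phi^+2 - phi) (2 * nu - 1) 0.
Proof. rewrite (Eb T) hbt (Emul T). apply: E_eq; rewrite ?mulr1 ?mul1r ?mulrN1 ?mulN1r; ring. Qed.

Lemma mul_btbt : mul bt bt = bt.
Proof. by rewrite hbt (Emul T); apply: E_eq; [ring | ring | field]. Qed.

Lemma mul_bb : mul b b = b.
Proof. by rewrite (Eb T) (Emul T); apply: E_eq; [ring | ring | field]. Qed.

Lemma dimV : span3 b bt 0 (mul b bt) -> has_dim (N2 mul b bt) 2.
Proof.
move=> hs; exists [:: b; bt]; split => //.
  apply: lin_free2 => k l; rewrite (Eb T) hbt !E_scale E_add -(E0 a b0 be) => /(Einj T) [_ h2 h3].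
  have hk : k = 2^-1 * ((k * 1 + l * 1) + (k * 1 + l * (-1))) by field.
  have hl : l = 2^-1 * ((k * 1 + l * 1) - (k * 1 + l * (-1))) by field.
  by split; [rewrite hk h2 h3 addr0 mulr0 | rewrite hl h2 h3 subrr mulr0].
move=> z; split.
  move=> hz; apply: span3_0; apply: (hz (span3 b bt 0)).
    apply: span3_closed => //.
    - by rewrite mul_bb; exists 1, 0, 0; exact: Eu.
    - by rewrite mulr0m; exists 0, 0, 0; rewrite E0.
    - by rewrite mul_btbt; exists 0, 1, 0; exact: Ev.
    - by rewrite mulr0m; exists 0, 0, 0; rewrite E0.
    - by rewrite mulr0m; exists 0, 0, 0; rewrite E0.
  by move=> y [->|->]; [exists 1, 0, 0; exact: Eu | exists 0, 1, 0; exact: Ev].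
move/span_of2 => [k [l ->]].
have hc : Defs.subalg_closed mul (N2 mul b bt) := gen_closed _.
by apply: (@sc_lin (N2 mul b bt)) => //; apply: gen_in; [left | right].
Qed.

Lemma one_id : eta = 2^-1 -> nu = 1 - phi -> nu != 0 ->
  is_identity mul (N2 mul a b) (EE 1 nu^-1 0).
Proof.
move=> he hn hnz; split; first by apply/(tb_N T); exists 1, nu^-1, 0.
move=> n /(tb_N T) [p [q [r ->]]]; rewrite (Emul T); apply: E_eq.
- by ring.
- by field.
- have h1 : 1 - phi != 0 by rewrite -hn.
  by rewrite he hn; field; rewrite h1 two0.
Qed.
End Tab2.

Lemma lin1 (c : F) {x y x1 y1 : F} : x1 = y1 -> x - y = c * (x1 - y1) -> x = y.
Proof. by move=> e h; apply/eqP; rewrite -subr_eq0 h e subrr mulr0. Qed.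

Lemma N2C (a b : A) z : N2 mul b a z <-> N2 mul a b z.
Proof.
by split => h S hS hX; apply: h => // x hx; apply: hX; case: hx => ->; [right|left|right|left].
Qed.

Lemma has_dim_eq (P Q : A -> Prop) n : (forall z, P z <-> Q z) -> has_dim P n -> has_dim Q n.
Proof. by move=> hPQ [s [h1 h2 h3]]; exists s; split => // z; rewrite -hPQ. Qed.

Lemma main_sec (eta : F) (a b bt : A) :
  2 \notin [pchar F] -> eta != 0 -> eta != 1 ->
  is_axis mul eta a -> is_axis mul eta b ->
  has_dim (N2 mul a b) 3 ->
  tau_image mul eta a b bt ->
  (forall z, N2 mul b bt z <-> N2 mul a b z) \/
  (eta = 2^-1 /\
   exists one : A, is_identity mul (N2 mul a b) one /\
   let P1 :=
     [/\ mul a b = - (2^-1 *: one) + 2^-1 *: a + 2^-1 *: b,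
         mul b bt = 2^-1 *: b + 2^-1 *: bt,
         has_dim (N2 mul b bt) 2 &
         forall z, (span_of [:: b; bt] z /\ span_of [:: one; a] z) <->
                   exists k : F, z = k *: (one - a)] in
   let P2 :=
     [/\ mul a b = - (4^-1 *: one) + 2^-1 *: a + 2^-1 *: b,
         mul b bt = 0,
         has_dim (N2 mul b bt) 2 &
         forall z, (span_of [:: b; bt] z /\ span_of [:: one; a] z) <->
                   exists k : F, z = k *: one] in
   (P1 /\ ~ P2) \/ (~ P1 /\ P2)).
Proof.
move=> hchar eta0 eta1 ha hb hdim [bp [bm [hbp hbm hbb hbt]]].
have two0 : 2 != 0 :> F by move: hchar; rewrite inE.
have eta1' : 1 - eta != 0 by rewrite subr_eq0 eq_sym.
have haa : mul a a = a by case: ha.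
have hbbb : mul b b = b by case: hb.
have [phi [nu [b0 [be T]]]] := key eta0 two0 ha hbbb hdim.
have hdim' : has_dim (N2 mul b a) 3 by apply: has_dim_eq hdim => z; rewrite N2C.
have [phi' [nu' [a0 [ae T']]]] := key eta0 two0 hb haa hdim'.
have h1 := a_ab T.
have h2 := a_ab T'.
have [r1 _ _] := @psi_rel _ _ _ _ _ _ _ T phi' ltac:(by rewrite (mulC a b) h2).
have [r1' _ _] := @psi_rel _ _ _ _ _ _ _ T' phi ltac:(by rewrite (mulC b a) h1).
have ephi : phi' = phi.
  move/eqP: r1'; move/eqP: r1; rewrite !mulf_eq0 (negbTE eta1') !orbF.
  case/orP => [/eqP p0|]; last by rewrite subr_eq0 => /eqP ->.
  case/orP => [/eqP p0'|]; last by rewrite subr_eq0 => /eqP ->.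
  by rewrite p0 p0'.
subst phi'.
have [_ H1 H2] := @psi_rel _ _ _ _ _ _ _ T phi ltac:(by rewrite (mulC a b) h2).
have [hbp' hbm'] : bp = phi *: a + b0 /\ bm = be.
  apply: (uniq_pe ha hbp hbm (tb_Ap T) (tb_e T)).
  by rewrite -hbb (Eb T) E_def !scale1r.
have hbtE : bt = E a b0 be phi 1 (-1).
  by rewrite hbt hbp' hbm' E_def scale1r scaleN1r.
have hc : Defs.subalg_closed mul (N2 mul b bt) := gen_closed _.
have [hc0 hcD hcZ hcM] := hc.
have Vb : N2 mul b bt b by apply: gen_in; left.
have Vbt : N2 mul b bt bt by apply: gen_in; right.
have hbbt := mul_bbt T hbtE.
case: (eqVneq (phi * (nu - phi)) 0) => [hz|hnz].
  right.
  have eta_h : eta = 2^-1.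
    case: (eqVneq (2 * eta - 1) 0) => [e0|en].
      apply: (mulfI two0); rewrite mulfV //; apply/eqP; rewrite -subr_eq0; exact/eqP.
    exfalso.
    have e1 : (2 * eta - 1) * (phi - eta / 2) = 0.
      by move/eqP: H2; rewrite -subr_eq0 => /eqP H2; rewrite -H2; field.
    move/eqP: e1; rewrite mulf_eq0 (negbTE en) /= subr_eq0 => /eqP hphi.
    have hnu : nu = (1 + eta) / 2.
      apply: (mulfI eta0).
      have -> : eta * nu = eta - eta * (1 - nu) by ring.
      by rewrite H1 hphi; field.
    move: hz; rewrite hphi hnu.
    have -> : eta / 2 * ((1 + eta) / 2 - eta / 2) = eta * 2^-1 * 2^-1 by field.
    by move/eqP; rewrite !mulf_eq0 invr_eq0 (negbTE eta0) (negbTE two0).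
  subst eta.
  have hnu : nu = 1 - phi.
    apply: (mulfI (invr_neq0 two0)).
    have -> : 2^-1 * nu = 2^-1 - 2^-1 * (1 - nu) by ring.
    by rewrite H1; field.
  have Esa : forall k, k *: a = E a b0 be k 0 0.
    by move=> k; rewrite {1}(@Eu _ _ a b0 be) E_scale !mulr0 mulr1.
  have hoa : E a b0 be 1 nu^-1 0 - a = E a b0 be 0 nu^-1 0.
    by rewrite -{2}[a]scale1r Esa E_sub; apply: E_eq; ring.
  split => //.
  have hnz : nu != 0.
    apply/negP => /eqP n0.
    have p1 : phi = 1 by move/eqP: (n0); rewrite hnu subr_eq0 eq_sym => /eqP.
    by move: hz; rewrite n0 p1 mul1r sub0r => /eqP; rewrite oppr_eq0 oner_eq0.
  exists (E a b0 be 1 nu^-1 0); split; first exact: one_id T two0 erefl hnu hnz.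
  cbv zeta.
  have /orP [/eqP p0|hp] : (phi == 0) || (1 - phi - phi == 0) by rewrite -mulf_eq0 -hnu hz.
    subst phi; have hnu1 : nu = 1 by rewrite hnu subr0.
    clear hnu; subst nu; rewrite invr1 in hoa *.
    have hV : mul b bt = 2^-1 *: b + 2^-1 *: bt.
      by rewrite hbbt (Eb T) hbtE !E_scale E_add; apply: E_eq; field; rewrite ?two0 ?subr0 ?oner_neq0.
    left; split.
      split => //.
      - by rewrite (Eab T) Esa (Eb T) !E_scale E_opp !E_add; apply: E_eq; field; rewrite ?two0 ?subr0 ?oner_neq0.
      - by apply: (dimV T hbtE two0); rewrite hV; exists 2^-1, 2^-1, 0; rewrite E_def scaler0 addr0.
      move=> z; split.
        case=> /span_of2 [k [l ->]] /span_of2 [m [n e]]; exists m.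
        rewrite (Eb T) hbtE Esa !E_scale !E_add in e; have [e1 e2 e3] := Einj T e.
        rewrite hoa (Eb T) hbtE !E_scale E_add; apply: E_eq.
        - by ring.
        - by apply: (@lin1 (1) _ _ _ _ e2); ring.
        - by apply: (@lin1 (1) _ _ _ _ e3); ring.
      case=> k ->; split; apply/span_of2.
        by exists (k / 2), (k / 2); rewrite hoa (Eb T) hbtE !E_scale E_add; apply: E_eq; field; rewrite ?two0 ?subr0 ?oner_neq0.
      by exists k; exists (- k); rewrite hoa Esa !E_scale E_add; apply: E_eq; ring.
    case=> _ h _ _; move: h; rewrite hbbt -(E0 a b0 be) => /(Einj T) [_ h _].
    have : (1 : F) = 0 by apply: (@lin1 (1) _ _ _ _ h); field; rewrite ?two0 ?subr0 ?oner_neq0.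
    by move/eqP; rewrite oner_eq0.
  have hphi : phi = 2^-1.
    apply: (mulfI two0); rewrite mulfV //; apply/eqP; rewrite -subr_eq0.
    by move: hp; rewrite (_ : 1 - phi - phi = - (2 * phi - 1)) ?oppr_eq0 //; ring.
  subst phi.
  have hnu' : nu = 2^-1 by rewrite hnu; field; rewrite ?two0 ?subr0 ?oner_neq0.
  subst nu.
  have four0 : 4 != 0 :> F.
    by rewrite (_ : 4 = 2 * 2 :> F) ?mulf_neq0 //; ring.
  have hV : mul b bt = 0.
    by rewrite hbbt -(E0 a b0 be); apply: E_eq; field; rewrite ?two0 ?subr0 ?oner_neq0.
  right; split.
    case=> _ h _ _; move: h; rewrite hV (Eb T) hbtE !E_scale E_add -(E0 a b0 be) => /(Einj T) [_ h _].
    have : (1 : F) = 0 by apply: (@lin1 (-1) _ _ _ _ h); field; rewrite ?two0 ?subr0 ?oner_neq0.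
    by move/eqP; rewrite oner_eq0.
  split => //.
  - by rewrite (Eab T) Esa (Eb T) !E_scale E_opp !E_add; apply: E_eq; field; rewrite ?two0 ?subr0 ?oner_neq0.
  - by apply: (dimV T hbtE two0); rewrite hV; exists 0, 0, 0; rewrite E0.
  move=> z; split.
    case=> /span_of2 [k [l ->]] /span_of2 [m [n e]]; exists m.
    rewrite (Eb T) hbtE Esa !E_scale !E_add in e; have [e1 e2 e3] := Einj T e.
    rewrite (Eb T) hbtE !E_scale !E_add; apply: E_eq.
    - by apply: (@lin1 (2^-1) _ _ _ _ e2); field; rewrite ?two0 ?subr0 ?oner_neq0.
    - by apply: (@lin1 (1) _ _ _ _ e2); field; rewrite ?two0 ?subr0 ?oner_neq0.
    - by apply: (@lin1 (1) _ _ _ _ e3); field; rewrite ?two0 ?subr0 ?oner_neq0.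
  case=> k ->; split; apply/span_of2.
    by exists k, k; rewrite (Eb T) hbtE !E_scale !E_add; apply: E_eq; field; rewrite ?two0 ?subr0 ?oner_neq0.
  by exists k, 0; rewrite Esa !E_scale !E_add; apply: E_eq; field; rewrite ?two0 ?subr0 ?oner_neq0.
left => z; split.
- move=> hz; apply: (hz (N2 mul a b)); first exact: gen_closed.
  move=> y [->|->]; first by apply: gen_in; right.
  by apply/(tb_N T); rewrite hbtE; exact: span3_E.
- move=> hz; apply: (hz (N2 mul b bt)) => //.
  move=> y [->|->]; last by [].
  move: hnz; rewrite mulf_eq0 negb_or => /andP [p0 pn].
  have pn' : phi - nu != 0 by rewrite -oppr_eq0 opprB.
  have hae : a = (- (2 * nu - 1) / (2 * (2 * phi * (phi - nu)))) *: b
      + (- (2 * nu - 1) / (2 * (2 * phi * (phi - nu)))) *: bt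
      + (2 * phi * (phi - nu))^-1 *: mul b bt.
    rewrite {1}(@Eu _ _ a b0 be) hbbt (Eb T) hbtE !E_scale !E_add; apply: E_eq; field; by rewrite pn' p0 two0.
  by rewrite hae; apply: (hcD); [apply: (hcD)|]; apply: (hcZ) => //; apply: (hcM).
Qed.
End Alg.

Unset Implicit Arguments.

Theorem lemma3p11 (F : fieldType) (A : lmodType F) (mul : A -> A -> A)
    (eta : F) (a b bt : A) :
  2 \notin [pchar F] -> eta != 0 -> eta != 1 ->
  primitive_axial_Jordan mul eta ->
  is_axis mul eta a -> is_axis mul eta b -> a != b ->
  has_dim (N2 mul a b) 3 ->
  tau_image mul eta a b bt ->
  (forall z, N2 mul b bt z <-> N2 mul a b z) \/
  (eta = 2^-1 /\
   exists one : A, is_identity mul (N2 mul a b) one /\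
   let P1 :=
     [/\ mul a b = - (2^-1 *: one) + 2^-1 *: a + 2^-1 *: b,
         mul b bt = 2^-1 *: b + 2^-1 *: bt,
         has_dim (N2 mul b bt) 2 &
         forall z, (span_of [:: b; bt] z /\ span_of [:: one; a] z) <->
                   exists k : F, z = k *: (one - a)] in
   let P2 :=
     [/\ mul a b = - (4^-1 *: one) + 2^-1 *: a + 2^-1 *: b,
         mul b bt = 0,
         has_dim (N2 mul b bt) 2 &
         forall z, (span_of [:: b; bt] z /\ span_of [:: one; a] z) <->
                   exists k : F, z = k *: one] in
   (P1 /\ ~ P2) \/ (~ P1 /\ P2)).
Proof.
move=> hchar eta0 eta1 [[mC mL] _] ha hb _ hdim htau.
exact: (main_sec mC mL hchar eta0 eta1 ha hb hdim htau).
Qed.
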